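(* Let $(A,\circ)$ be an anti-pre-Lie algebra and define $x\star y=x\circ y-2y\circ x$ for $x,y\in A$. Then $(A,\star)$ is a pre-Lie algebra if and only if $(A,\circ)$ is an admissible Novikov algebra. Moreover, in this case $(A,\star)$ is a Novikov algebra.
   Context: All vector spaces are finite-dimensional over a field $\mathbb F$ of characteristic $0$. A pre-Lie algebra is $(A,\star)$ with $(x\star y)\star z-x\star(y\star z)=(y\star x)\star z-y\star(x\star z)$ for all $x,y,z$; a Novikov algebra is a pre-Lie algebra with additionally $(x\star y)\star z=(x\star z)\star y$. For a bilinear operation $\circ$ write $[x,y]=x\circ y-y\circ x$. An anti-pre-Lie algebra is $(A,\circ)$ such that for all $x,y,z$: (i) $x\circ(y\circ z)-y\circ(x\circ z)=[y,x]\circ z$, and (ii) $[x,y]\circ z+[y,z]\circ x+[z,x]\circ y=0$. An admissible Novikov algebra is $(A,\circ)$ satisfying (i) and $2x\circ[y,z]=(x\circ y)\circ z-(x\circ z)\circ y$. *)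

(* Defs.v *)
From HB Require Import structures.
From mathcomp Require Import all_boot all_order all_algebra.
Set Implicit Arguments. Unset Strict Implicit. Unset Printing Implicit Defensive.
Import GRing.Theory.
Local Open Scope ring_scope.

Section Algs.
Variables (F : fieldType) (V : lmodType F).

Definition bilinear_op (op : V -> V -> V) : Prop :=
  (forall a x y z, op (a *: x + y) z = a *: op x z + op y z) /\
  (forall a x y z, op z (a *: x + y) = a *: op z x + op z y).

Definition commutator (op : V -> V -> V) (x y : V) : V := op x y - op y x.

Definition is_preLie (op : V -> V -> V) : Prop :=
  forall x y z, op (op x y) z - op x (op y z) = op (op y x) z - op y (op x z).

Definition is_Novikov (op : V -> V -> V) : Prop :=
  is_preLie op /\ forall x y z, op (op x y) z = op (op x z) y.

Definition is_antiPreLie (op : V -> V -> V) : Prop :=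
  (forall x y z, op x (op y z) - op y (op x z) = op (commutator op y x) z) /\
  (forall x y z, op (commutator op x y) z + op (commutator op y z) x
                 + op (commutator op z x) y = 0).

Definition is_admissibleNovikov (op : V -> V -> V) : Prop :=
  (forall x y z, op x (op y z) - op y (op x z) = op (commutator op y x) z) /\
  (forall x y z, 2%:R *: op x (commutator op y z) = op (op x y) z - op (op x z) y).

Definition star_op (op : V -> V -> V) (x y : V) : V := op x y - 2%:R *: op y x.

End Algs.

(* Main.v *)
Require Import Defs.
From HB Require Import structures.
From mathcomp Require Import all_boot all_order all_algebra.
From mathcomp Require Import ring.
Import GRing.Theory.
Local Open Scope ring_scope.

Section Helpers.
Variables (F : fieldType) (V : vectType F).

Lemma coord_ext (u w : V) :
  (forall i, coord (vbasis (fullv : {vspace V})) i u =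
             coord (vbasis (fullv : {vspace V})) i w) -> u = w.
Proof.
move=> H; rewrite (coord_vbasis (memvf u)) (coord_vbasis (memvf w)).
by apply: eq_bigr => i _; rewrite H.
Qed.

Lemma cD n (X : n.-tuple V) i u v : coord X i (u + v) = coord X i u + coord X i v.
Proof. exact: raddfD. Qed.
Lemma cN n (X : n.-tuple V) i u : coord X i (- u) = - coord X i u.
Proof. exact: raddfN. Qed.
Lemma cZ n (X : n.-tuple V) i a u : coord X i (a *: u) = a * coord X i u.
Proof. by rewrite linearZ. Qed.

Lemma eq_sub0 (a b : F) : a = b -> a - b = 0.
Proof. by move=> ->; rewrite subrr. Qed.

Lemma mul_cancel (k a b : F) : k != 0 -> k * (a - b) = 0 -> a = b.
Proof.
move=> kn0 /eqP; rewrite mulf_eq0 (negbTE kn0) /= subr_eq0 => /eqP //.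
Qed.

Variables (op : V -> V -> V) (Hb : bilinear_op op).

Lemma op0l z : op 0 z = 0.
Proof.
have := (proj1 Hb) 1 0 0 z; rewrite !scale1r addr0 => H.
by apply: (@addrI _ (op 0 z)); rewrite addr0 -H.
Qed.
Lemma op0r z : op z 0 = 0.
Proof.
have := (proj2 Hb) 1 0 0 z; rewrite !scale1r addr0 => H.
by apply: (@addrI _ (op z 0)); rewrite addr0 -H.
Qed.
Lemma opDl x y z : op (x + y) z = op x z + op y z.
Proof. by have := (proj1 Hb) 1 x y z; rewrite !scale1r. Qed.
Lemma opDr x y z : op z (x + y) = op z x + op z y.
Proof. by have := (proj2 Hb) 1 x y z; rewrite !scale1r. Qed.
Lemma opZl a x z : op (a *: x) z = a *: op x z.
Proof. by have := (proj1 Hb) a x 0 z; rewrite !addr0 op0l addr0. Qed.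
Lemma opZr a x z : op z (a *: x) = a *: op z x.
Proof. by have := (proj2 Hb) a x 0 z; rewrite !addr0 op0r addr0. Qed.
Lemma opNl x z : op (- x) z = - op x z.
Proof. by rewrite -scaleN1r opZl scaleN1r. Qed.
Lemma opNr x z : op z (- x) = - op z x.
Proof. by rewrite -scaleN1r opZr scaleN1r. Qed.

End Helpers.
Arguments mul_cancel {F} k a b.
Arguments eq_sub0 {F} a b.
Arguments coord_ext {F V} u w.

Ltac tc e i H := move: (congr1 (coord e i) H);
  rewrite ?(cD, cN, cZ) => {}H.

Ltac dif h := match type of h with ?P = ?Q => constr:(P - Q) end.

Theorem proposition3p6 (F : fieldType) (V : vectType F)
  (op : V -> V -> V) :
  [pchar F] =i pred0 ->
  bilinear_op op ->
  is_antiPreLie op ->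
  (is_preLie (star_op op) <-> is_admissibleNovikov op) /\
  (is_preLie (star_op op) -> is_Novikov (star_op op)).
Proof.
move=> /pcharf0P ch Hb [api apii].
have two : (2%:R : F) != 0 by rewrite ch.
have one : (1 : F) != 0 by rewrite oner_eq0.
have oDl := @opDl _ _ _ Hb; have oDr := @opDr _ _ _ Hb; have oZl := @opZl _ _ _ Hb;
have oZr := @opZr _ _ _ Hb; have oNl := @opNl _ _ _ Hb; have oNr := @opNr _ _ _ Hb.
split; first split.
- move=> spl; split => // x y z; apply: coord_ext => i.
  have h1 := api x y z; have h2 := api x z y; have h3 := api y z x;
  have h4 := apii x y z; have h5 := spl x y z; have h6 := spl x z y.
  rewrite /star_op /commutator ?(oDl, oNl, oZl, oDr, oNr, oZr, scalerDr, scalerN, scalerA) in h1; rewrite /star_op /commutator ?(oDl, oNl, oZl, oDr, oNr, oZr, scalerDr, scalerN, scalerA) in h2; rewrite /star_op /commutator ?(oDl, oNl, oZl, oDr, oNr, oZr, scalerDr, scalerN, scalerA) in h3; rewrite /star_op /commutator ?(oDl, oNl, oZl, oDr, oNr, oZr, scalerDr, scalerN, scalerA) in h4; rewrite /star_op /commutator ?(oDl, oNl, oZl, oDr, oNr, oZr, scalerDr, scalerN, scalerA) in h5; rewrite /star_op /commutator ?(oDl, oNl, oZl, oDr, oNr, oZr, scalerDr, scalerN, scalerA) in h6.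
  rewrite /star_op /commutator ?(oDl, oNl, oZl, oDr, oNr, oZr, scalerDr, scalerN, scalerA).
  tc (vbasis (fullv : {vspace V})) i h1; tc (vbasis (fullv : {vspace V})) i h2; tc (vbasis (fullv : {vspace V})) i h3; tc (vbasis (fullv : {vspace V})) i h4; tc (vbasis (fullv : {vspace V})) i h5; tc (vbasis (fullv : {vspace V})) i h6.
  rewrite ?(cD, cN, cZ).
  apply: (mul_cancel _ _ _ two);
  let d1 := dif h1 in let d2 := dif h2 in let d3 := dif h3 in
  let d4 := dif h4 in let d5 := dif h5 in let d6 := dif h6 in
  transitivity (7%:R * d1 - 7%:R * d2 + 8%:R * d3 - 14%:R * d4 + d5 - d6);
    [ring | by rewrite (eq_sub0 _ _ h1) (eq_sub0 _ _ h2) (eq_sub0 _ _ h3) (eq_sub0 _ _ h4)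
              (eq_sub0 _ _ h5) (eq_sub0 _ _ h6) !mulr0 !subr0 !addr0].
- move=> [_ adm] x y z; apply: coord_ext => i.
  have h1 := api x y z; have h2 := api x z y; have h3 := api y z x;
  have h4 := apii x y z; have h5 := adm x y z; have h6 := adm y x z.
  rewrite /star_op /commutator ?(oDl, oNl, oZl, oDr, oNr, oZr, scalerDr, scalerN, scalerA) in h1; rewrite /star_op /commutator ?(oDl, oNl, oZl, oDr, oNr, oZr, scalerDr, scalerN, scalerA) in h2; rewrite /star_op /commutator ?(oDl, oNl, oZl, oDr, oNr, oZr, scalerDr, scalerN, scalerA) in h3; rewrite /star_op /commutator ?(oDl, oNl, oZl, oDr, oNr, oZr, scalerDr, scalerN, scalerA) in h4; rewrite /star_op /commutator ?(oDl, oNl, oZl, oDr, oNr, oZr, scalerDr, scalerN, scalerA) in h5; rewrite /star_op /commutator ?(oDl, oNl, oZl, oDr, oNr, oZr, scalerDr, scalerN, scalerA) in h6.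
  rewrite /star_op /commutator ?(oDl, oNl, oZl, oDr, oNr, oZr, scalerDr, scalerN, scalerA).
  tc (vbasis (fullv : {vspace V})) i h1; tc (vbasis (fullv : {vspace V})) i h2; tc (vbasis (fullv : {vspace V})) i h3; tc (vbasis (fullv : {vspace V})) i h4; tc (vbasis (fullv : {vspace V})) i h5; tc (vbasis (fullv : {vspace V})) i h6.
  rewrite ?(cD, cN, cZ).
  apply: (mul_cancel _ _ _ one);
  let d1 := dif h1 in let d2 := dif h2 in let d3 := dif h3 in
  let d4 := dif h4 in let d5 := dif h5 in let d6 := dif h6 in
  transitivity (- 5%:R * d1 + 6%:R * d2 - 6%:R * d3 + 10%:R * d4 + 2%:R * d5 - 2%:R * d6);
    [ring | by rewrite (eq_sub0 _ _ h1) (eq_sub0 _ _ h2) (eq_sub0 _ _ h3) (eq_sub0 _ _ h4)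
              (eq_sub0 _ _ h5) (eq_sub0 _ _ h6) !mulr0 !subr0 !addr0].
- move=> spl; split => // x y z; apply: coord_ext => i.
  have h1 := api x y z; have h2 := api x z y;
  have h4 := apii x y z; have h5 := spl x y z; have h6 := spl x z y.
  rewrite /star_op /commutator ?(oDl, oNl, oZl, oDr, oNr, oZr, scalerDr, scalerN, scalerA) in h1; rewrite /star_op /commutator ?(oDl, oNl, oZl, oDr, oNr, oZr, scalerDr, scalerN, scalerA) in h2; rewrite /star_op /commutator ?(oDl, oNl, oZl, oDr, oNr, oZr, scalerDr, scalerN, scalerA) in h4; rewrite /star_op /commutator ?(oDl, oNl, oZl, oDr, oNr, oZr, scalerDr, scalerN, scalerA) in h5; rewrite /star_op /commutator ?(oDl, oNl, oZl, oDr, oNr, oZr, scalerDr, scalerN, scalerA) in h6.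
  rewrite /star_op /commutator ?(oDl, oNl, oZl, oDr, oNr, oZr, scalerDr, scalerN, scalerA).
  tc (vbasis (fullv : {vspace V})) i h1; tc (vbasis (fullv : {vspace V})) i h2; tc (vbasis (fullv : {vspace V})) i h4; tc (vbasis (fullv : {vspace V})) i h5; tc (vbasis (fullv : {vspace V})) i h6.
  rewrite ?(cD, cN, cZ).
  apply: (mul_cancel _ _ _ two);
  let d1 := dif h1 in let d2 := dif h2 in
  let d4 := dif h4 in let d5 := dif h5 in let d6 := dif h6 in
  transitivity (3%:R * d1 - 3%:R * d2 - 6%:R * d4 + d5 - d6);
    [ring | by rewrite (eq_sub0 _ _ h1) (eq_sub0 _ _ h2) (eq_sub0 _ _ h4)
              (eq_sub0 _ _ h5) (eq_sub0 _ _ h6) !mulr0 !subr0 !addr0].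
Qed.
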